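(* Let $T>0$ and let $\mathbf u_i(t)$ (continuously differentiable) and $p_i(t)$, $i=1,\dots,N_h$, solve the semi-discrete scheme (S1)–(S2) on $[0,T]$. Set $d^{\rm add}_{ij}=d^u_{ij}-\nu s_{ij}$. Then $$\int_0^T\sum_{i=1}^{N_h}\sum_{j\in\mathcal N_i\setminus\{i\}}\Big[\frac{d^{\rm add}_{ij}}{2}|\mathbf u_j-\mathbf u_i|^2+\frac{d^p_{ij}}{2}(p_j-p_i)^2\Big]dt=\sum_{i=1}^{N_h}m_i\eta(\mathbf u_i(0))-\sum_{i=1}^{N_h}m_i\eta(\mathbf u_i(T)).$$
   Context: Setting. Let $d\in\{2,3\}$ and let $\Omega\subset\mathbb R^d$ be a box on which periodic boundary conditions are imposed (all functions on $\Omega$ are periodic, so $\Omega$ is effectively a flat torus and integration by parts produces no boundary terms). $\mathcal T_h$ is a conforming simplicial mesh of $\Omega$ compatible with periodicity, with (periodically identified) vertices $\mathbf x_1,\dots,\mathbf x_{N_h}$; $\varphi_1,\dots,\varphi_{N_h}$ are the continuous piecewise-linear Lagrange basis functions ($\varphi_i(\mathbf x_j)=\delta_{ij}$), $V_h=\mathrm{span}\{\varphi_i\}$, $\mathbf V_h=(V_h)^d$. For $v_h\in V_h$ write $v_i=v_h(\mathbf x_i)$; similarly $\mathbf u_h=\sum_j\mathbf u_j\varphi_j$ for vector-valued functions. $\mathcal N_i$ is the set of indices $j$ (including $j=i$) for which the supports of $\varphi_i,\varphi_j$ overlap. Coefficients: $m_{ij}=\int_\Omega\varphi_i\varphi_j\,dx$,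 $m_i=\int_\Omega\varphi_i\,dx$, $\mathbf c_{ij}=\int_\Omega\varphi_i\nabla\varphi_j\,dx$, $s_{ij}=\int_\Omega\nabla\varphi_i\cdot\nabla\varphi_j\,dx$, and, for a given $\mathbf u_h=\sum_j\mathbf u_j\varphi_j$, $\tilde a_{ij}=\frac{\mathbf u_i+\mathbf u_j}{2}\cdot\mathbf c_{ij}$ and $a_{ij}=\frac12\int_\Omega[\varphi_i\,\mathbf u_h\cdot\nabla\varphi_j-\varphi_j\,\mathbf u_h\cdot\nabla\varphi_i]\,dx$. The kinetic energy is $\eta(\mathbf u)=|\mathbf u|^2/2$. Scheme. Given a viscosity $\nu\ge 0$ and symmetric matrices $D^u=(d^u_{ij})$, $D^p=(d^p_{ij})$ with zero row sums ($\sum_j d^u_{ij}=\sum_j d^p_{ij}=0$) and $d^u_{ij}=d^p_{ij}=0$ for $j\notin\mathcal N_i$ (the entries $d^u_{ij}$ may depend on the current velocity), the semi-discrete scheme is the system, for all $i,k=1,\dots,N_h$, (S1) $m_i\frac{d\mathbf u_i}{dt}=\sum_{j\in\mathcal N_i}\big[(d^u_{ij}-\tilde a_{ij}-\nu s_{ij})\mathbf u_j-\mathbf c_{ij}p_j\big]$, (S2) $0=\sum_{j\in\mathcal N_k}\big[d^p_{kj}p_j-\mathbf c_{kj}\cdot\mathbf u_j\big]$, where $\tilde a_{ij}$ is computed from the current $\mathbf u_h(t)$. *)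

(* Defs.v *)
From HB Require Import structures.
From mathcomp Require Import all_boot all_order all_algebra.
From mathcomp Require Import all_classical all_reals all_analysis.
Set Implicit Arguments. Unset Strict Implicit. Unset Printing Implicit Defensive.
Import Order.TTheory GRing.Theory Num.Theory.
Local Open Scope ring_scope.

Definition dotv (R : realType) (d : nat) (a b : 'rV[R]_d) : R :=
  \sum_(k < d) a 0 k * b 0 k.

Definition sqnorm (R : realType) (d : nat) (a : 'rV[R]_d) : R := dotv a a.

Definition eta_kin (R : realType) (d : nat) (a : 'rV[R]_d) : R := sqnorm a / 2.

(* Abstract interface for the periodic P1 Galerkin coefficients
   m_i = int phi_i, c_ij = int phi_i grad phi_j, s_ij = int grad phi_i . grad phi_j,
   and the stencil relation  nb i j  <->  j \in N_i  (overlapping supports). *)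
Definition periodic_P1_coeffs (R : realType) (Nh d : nat)
    (m : 'I_Nh -> R) (c : 'I_Nh -> 'I_Nh -> 'rV[R]_d)
    (s : 'I_Nh -> 'I_Nh -> R) (nb : 'I_Nh -> 'I_Nh -> bool) : Prop :=
  [/\ (forall i, 0 < m i),
      (forall i, nb i i),
      (forall i j, nb i j = nb j i),
      (forall i j, ~~ nb i j -> c i j = 0 /\ s i j = 0)
    & 
[/\ (forall i j, c i j + c j i = 0),          (* periodicity: int grad(phi_i phi_j) = 0 *)
      (forall i, \sum_j c i j = 0),             (* partition of unity *)
      (forall i j, s i j = s j i)
    & (forall i, \sum_j s i j = 0) ] ].

Definition atilde (R : realType) (Nh d : nat) (c : 'I_Nh -> 'I_Nh -> 'rV[R]_d)
    (uv : 'I_Nh -> 'rV[R]_d) (i j : 'I_Nh) : R :=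
  dotv ((2^-1) *: (uv i + uv j)) (c i j).

Definition diffusion_matrix (R : realType) (Nh : nat)
    (nb : 'I_Nh -> 'I_Nh -> bool) (D : 'I_Nh -> 'I_Nh -> R) : Prop :=
  [/\ (forall i j, D i j = D j i),
      (forall i, \sum_j D i j = 0)
    & (forall i j, ~~ nb i j -> D i j = 0)].

(* Main.v *)
Require Import Defs.
From HB Require Import structures.
From mathcomp Require Import all_boot all_order all_algebra.
From mathcomp Require Import all_classical all_reals all_analysis.
From mathcomp Require Import measurable_realfun ftc.
From mathcomp Require Import ring lra.
Import Order.TTheory GRing.Theory Num.Theory numFieldNormedType.Exports.
Local Open Scope classical_set_scope.
Local Open Scope ring_scope.
Section Dot.
Context {R : realType} {d : nat}.
Implicit Types a b e : 'rV[R]_d.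
Lemma dotvC a b : dotv a b = dotv b a.
Proof. by rewrite /dotv; apply: eq_bigr => k _; rewrite mulrC. Qed.
Lemma dotvDl a b e : dotv (a + b) e = dotv a e + dotv b e.
Proof. by rewrite /dotv -big_split; apply: eq_bigr => k _; rewrite mxE mulrDl. Qed.
Lemma dotvZl k a b : dotv (k *: a) b = k * dotv a b.
Proof. by rewrite /dotv mulr_sumr; apply: eq_bigr => i _; rewrite mxE mulrA. Qed.
Lemma dotvNl a b : dotv (- a) b = - dotv a b.
Proof. by rewrite -scaleN1r dotvZl mulN1r. Qed.
Lemma dotvBl a b e : dotv (a - b) e = dotv a e - dotv b e.
Proof. by rewrite dotvDl dotvNl. Qed.
Lemma dotvDr a b e : dotv e (a + b) = dotv e a + dotv e b.
Proof. by rewrite dotvC dotvDl !(dotvC e). Qed.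
Lemma dotvZr k a b : dotv b (k *: a) = k * dotv b a.
Proof. by rewrite dotvC dotvZl dotvC. Qed.
Lemma dotvBr a b e : dotv e (a - b) = dotv e a - dotv e b.
Proof. by rewrite dotvC dotvBl !(dotvC e). Qed.
Lemma dotv0r a : dotv a 0 = 0.
Proof. by rewrite /dotv big1 // => k _; rewrite mxE mulr0. Qed.
Lemma dotv_sumr (I : finType) (P : pred I) (F : I -> 'rV[R]_d) a :
  dotv a (\sum_(i | P i) F i) = \sum_(i | P i) dotv a (F i).
Proof.
rewrite /dotv exchange_big /=; apply: eq_bigr => k _.
by rewrite summxE mulr_sumr.
Qed.
Lemma sqnormB a b : sqnorm (a - b) = sqnorm a - 2 * dotv a b + sqnorm b.
Proof. rewrite /sqnorm dotvBl !dotvBr (dotvC b a); ring. Qed.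
End Dot.

Lemma quad_sum (R : realType) Nh (a : 'I_Nh -> 'I_Nh -> R) (q : 'I_Nh -> R)
  (b : 'I_Nh -> 'I_Nh -> R) :
  (forall i j, a i j = a j i) -> (forall i, \sum_j a i j = 0) ->
  \sum_i \sum_j (a i j / 2 * (q j - 2 * b i j + q i)) =
  - \sum_i \sum_j a i j * b i j.
Proof.
move=> asym arow.
have E1 : \sum_i \sum_j a i j * q i = 0.
  by rewrite big1 // => i _; rewrite -mulr_suml arow mul0r.
have E2 : \sum_i \sum_j a i j * q j = 0.
  rewrite exchange_big big1 // => j _ /=.
  by rewrite -mulr_suml (eq_bigr (fun i => a j i)) ?arow ?mul0r // => i _; rewrite asym.
have -> : \sum_i \sum_j (a i j / 2 * (q j - 2 * b i j + q i)) =
  (\sum_i \sum_j a i j * q j) / 2 - \sum_i \sum_j a i j * b i j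
   + (\sum_i \sum_j a i j * q i) / 2.
  rewrite !mulr_suml -sumrB -big_split /=; apply: eq_bigr => i _.
  rewrite !mulr_suml -sumrB -big_split /=; apply: eq_bigr => j _.
  by field.
by rewrite E1 E2; ring.
Qed.

Lemma alg (R : realType) d Nh (c : 'I_Nh -> 'I_Nh -> 'rV[R]_d)
  (a dp : 'I_Nh -> 'I_Nh -> R) (nb : 'I_Nh -> 'I_Nh -> bool)
  (U : 'I_Nh -> 'rV[R]_d) (P : 'I_Nh -> R) :
  (forall i j, c i j + c j i = 0) ->
  (forall i j, ~~ nb i j -> c i j = 0) ->
  diffusion_matrix nb a -> diffusion_matrix nb dp ->
  (forall k, 0 = \sum_(j | nb k j) (dp k j * P j - dotv (c k j) (U j))) ->
  \sum_i \sum_(j | nb i j && (j != i))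
     (a i j / 2 * sqnorm (U j - U i) + dp i j / 2 * (P j - P i) ^+ 2)
  = - \sum_i dotv (U i) (\sum_(j | nb i j)
        ((a i j - atilde c U i j) *: U j - P j *: c i j)).
Proof.
move=> hc hcnb [asym arow anb] [psym prow pnb] hS2.
have hS2' k : \sum_j dotv (c k j) (U j) = \sum_j dp k j * P j.
  apply/eqP; rewrite eq_sym -subr_eq0 -sumrB; apply/eqP.
  rewrite [RHS](hS2 k) [RHS]big_mkcond /=; apply: eq_bigr => j _.
  case: ifP => // /negbT hn.
  by rewrite pnb // hcnb // /dotv big1 ?mul0r ?subrr // => k' _; rewrite mxE mul0r.
have LHS : \sum_i \sum_(j | nb i j && (j != i))
     (a i j / 2 * sqnorm (U j - U i) + dp i j / 2 * (P j - P i) ^+ 2)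
   = \sum_i \sum_j (a i j / 2 * (sqnorm (U j) - 2 * dotv (U i) (U j) + sqnorm (U i)))
   + \sum_i \sum_j (dp i j / 2 * (P j ^+ 2 - 2 * (P i * P j) + P i ^+ 2)).
  rewrite -big_split /=; apply: eq_bigr => i _.
  rewrite -big_split /= big_mkcond /=; apply: eq_bigr => j _.
  rewrite sqnormB (dotvC (U j)).
  case: (boolP (nb i j)) => hn /=; last by rewrite anb // pnb //; field.
  case: eqP => [->|_] /=; last by field.
  by rewrite /sqnorm; field.
rewrite LHS !quad_sum //.
have hR : forall i, dotv (U i) (\sum_(j | nb i j)
        ((a i j - atilde c U i j) *: U j - P j *: c i j)) =
   \sum_j (a i j * dotv (U i) (U j) - atilde c U i j * dotv (U i) (U j)
            - P j * dotv (U i) (c i j)).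
  move=> i; rewrite dotv_sumr big_mkcond /=; apply: eq_bigr => j _.
  case: (boolP (nb i j)) => hn; first by rewrite dotvBr !dotvZr; ring.
  by rewrite /atilde anb // hcnb // !dotv0r; ring.
rewrite (eq_bigr _ (fun i _ => hR i)).
have conv : \sum_i \sum_j atilde c U i j * dotv (U i) (U j) = 0.
  set X := (LHS in LHS = _).
  have : X = - X.
    rewrite {1}/X exchange_big /= -sumrN; apply: eq_bigr => i _.
    rewrite -sumrN; apply: eq_bigr => j _.
    rewrite dotvC /atilde addrC.
    have -> : c j i = - c i j by apply/eqP; rewrite -addr_eq0 addrC hc.
    by rewrite [dotv _ (- _)]dotvC dotvNl (dotvC (c i j)) mulNr.
  by move=> hX; lra.
have press : \sum_i \sum_j P j * dotv (U i) (c i j)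
    = - \sum_i \sum_j dp i j * (P i * P j).
  rewrite exchange_big /= -sumrN; apply: eq_bigr => i _.
  have : \sum_j P i * dotv (U j) (c j i) = - (P i * \sum_j dotv (c i j) (U j)).
    rewrite mulr_sumr -sumrN; apply: eq_bigr => j _.
    have -> : c j i = - c i j by apply/eqP; rewrite -addr_eq0 addrC hc.
    by rewrite dotvC dotvNl mulrN.
  move=> ->; rewrite hS2' mulr_sumr; congr (- _); apply: eq_bigr => j _.
  by rewrite mulrCA.
have expand : \sum_i \sum_j (a i j * dotv (U i) (U j) - atilde c U i j * dotv (U i) (U j)
            - P j * dotv (U i) (c i j)) =
   \sum_i \sum_j a i j * dotv (U i) (U j) - \sum_i \sum_j atilde c U i j * dotv (U i) (U j)
   - \sum_i \sum_j P j * dotv (U i) (c i j).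
  rewrite -!sumrB; apply: eq_bigr => i _; by rewrite -!sumrB.
rewrite expand conv press; ring.
Qed.

Section Calc.
Context {R : realType} {d : nat}.

Lemma is_derive_coord (f : R -> 'rV[R]_d) t k : derivable f t 1 ->
  is_derive t (1:R) (fun s => f s 0 k) ((derive1 f t) 0 k).
Proof.
move=> df; have dk := (derivable_mxP f t 1).1 df 0 k.
apply: is_derive_eq (derivableP dk) _.
by rewrite derive1E derive_mx // mxE.
Qed.

Lemma is_derive_scal (g : R -> R) t dg k : is_derive t (1:R) g dg ->
  is_derive t (1:R) (fun s => k * g s) (k * dg).
Proof. move=> h; exact: (is_deriveZ k h). Qed.

Lemma is_derive_dotself (f : R -> 'rV[R]_d) t : derivable f t 1 ->
  is_derive t (1:R) (fun s => dotv (f s) (f s)) (2 * dotv (f t) (derive1 f t)).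
Proof.
move=> df.
have hk k : is_derive t (1:R) ((fun s => f s 0 k) * (fun s => f s 0 k))
    (2 * (f t 0 k * (derive1 f t) 0 k)).
  have h := @is_derive_coord f t k df.
  apply: is_derive_eq (is_deriveM h h) _.
  rewrite /GRing.scale /=; ring.
have := is_derive_sum hk; rewrite fct_sumE => h.
apply: is_derive_eq h _.
by rewrite /dotv mulr_sumr.
Qed.

Lemma cvg_bigsum (T : Type) (F : set_system T) {FF : Filter F} (I : Type)
  (r : seq I) (f : I -> T -> R) (l : I -> R) :
  (forall i, f i @ F --> l i) ->
  (fun x => \sum_(i <- r) f i x) @ F --> \sum_(i <- r) l i.
Proof.
move=> hf; elim: r => [|a r IH].
  under eq_fun do rewrite big_nil; rewrite big_nil; exact: cvg_cst.
under eq_fun do rewrite big_cons; rewrite big_cons.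
exact: (cvgD (hf a) IH).
Qed.

Lemma cvg_dotv (T : Type) (F : set_system T) {FF : Filter F}
  (v w : T -> 'rV[R]_d) v0 w0 : v @ F --> v0 -> w @ F --> w0 ->
  (fun x => dotv (v x) (w x)) @ F --> dotv v0 w0.
Proof.
move=> hv hw; rewrite /dotv; apply: cvg_bigsum => k.
apply: cvgM.
  exact: (continuous_cvg _ (@coord_continuous R 1 d 0 k _) hv).
exact: (continuous_cvg _ (@coord_continuous R 1 d 0 k _) hw).
Qed.
End Calc.
Arguments is_derive_coord {R d f t} k _.
Arguments is_derive_scal {R g t dg} k _.
Arguments is_derive_dotself {R d f t} _.
Arguments cvg_dotv {R d T F FF v w v0 w0} _ _.

Theorem lemma1 (R : realType) (d Nh : nat) (hd : (d == 2%N) || (d == 3%N))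
  (m : 'I_Nh -> R) (c : 'I_Nh -> 'I_Nh -> 'rV[R]_d)
  (s : 'I_Nh -> 'I_Nh -> R) (nb : 'I_Nh -> 'I_Nh -> bool)
  (hFE : periodic_P1_coeffs m c s nb)
  (nu : R) (hnu : 0 <= nu)
  (du : R -> 'I_Nh -> 'I_Nh -> R) (dp : 'I_Nh -> 'I_Nh -> R)
  (T : R) (hT : 0 < T)
  (u : 'I_Nh -> R -> 'rV[R]_d) (p : 'I_Nh -> R -> R)
  (hdu : forall t : R, t \in `[0, T] -> diffusion_matrix nb (du t))
  (hdp : diffusion_matrix nb dp)
  (* u_i continuously differentiable on [0,T] *)
  (hucont : forall i, {within [set` `[0, T]%R], continuous (u i)})
  (huder : forall i (t : R), t \in `]0, T[ -> derivable (u i) t 1)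
  (hudc : forall i, exists g : R -> 'rV[R]_d,
            {within [set` `[0, T]%R], continuous g} /\
            forall t : R, t \in `]0, T[ -> derive1 (u i) t = g t)
  (* (S1) *)
  (hS1 : forall i (t : R), t \in `]0, T[ ->
     m i *: derive1 (u i) t =
       \sum_(j | nb i j)
          ((du t i j - atilde c (fun k => u k t) i j - nu * s i j) *: u j t
           - p j t *: c i j))
  (* (S2) *)
  (hS2 : forall k (t : R), t \in `]0, T[ ->
     0 = \sum_(j | nb k j) (dp k j * p j t - dotv (c k j) (u j t))) :
  (\int[lebesgue_measure]_(t in [set` `[0%R, T]%R])
     (\sum_i \sum_(j | nb i j && (j != i))
        ((du t i j - nu * s i j) / 2 * sqnorm (u j t - u i t)
         + dp i j / 2 * (p j t - p i t) ^+ 2))%:E)%E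
  = (\sum_i m i * eta_kin (u i 0) - \sum_i m i * eta_kin (u i T))%:E.
Proof.
case: hFE => hm _ _ hcsnb [hc _ hssym hsrow].
have hcnb i j : ~~ nb i j -> c i j = 0 by move=> /hcsnb[].
have hsnb i j : ~~ nb i j -> s i j = 0 by move=> /hcsnb[].
have [G hG] := choice hudc.
pose Ef := fun t => \sum_i m i * (dotv (u i t) (u i t) / 2).
pose ff := fun t => - \sum_i m i * dotv (u i t) (G i t).
pose F := fun t => - Ef t.
have hder t : t \in `]0, T[ -> is_derive t (1:R) F (ff t).
  move=> tin.
  have hi i : is_derive t (1:R) (fun y => m i * (dotv (u i y) (u i y) / 2))
                 (m i * dotv (u i t) (G i t)).
    have h := is_derive_scal (m i / 2) (is_derive_dotself (huder i t tin)).
    have -> : (fun y => m i * (dotv (u i y) (u i y) / 2)) =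
              (fun y => m i / 2 * dotv (u i y) (u i y)).
      by apply/funext => y; rewrite mulrA mulrAC.
    apply: is_derive_eq h _.
    by rewrite ((hG i).2 t tin); field.
  have := is_derive_sum hi; rewrite fct_sumE => hs.
  exact: (is_deriveN hs).
have hderv t : t \in `]0, T[ -> derive1 F t = ff t.
  by move=> tin; have H := hder t tin; rewrite derive1E derive_val.
have hcontF : {within `[0, T], continuous F}.
  move=> x; apply: cvgN; apply: cvg_bigsum => i.
  apply: cvgMl_tmp; apply: cvgMr_tmp.
  have H1 := cvg_dotv (hucont i x) (hucont i x). exact: H1.
have hcontf : {within `[0, T], continuous ff}.
  move=> x; apply: cvgN; apply: cvg_bigsum => i.
  apply: cvgMl_tmp.
  exact: (cvg_dotv (hucont i x) ((hG i).1 x)).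
have [_ hl hr] := (continuous_within_itvP F hT).1 hcontF.
have hFTC := continuous_FTC2 hT hcontf (And3 (fun t tin => @ex_derive _ _ _ _ _ _ _ (hder t tin)) hl hr) hderv.
set H := fun t => \sum_i \sum_(j | nb i j && (j != i))
        ((du t i j - nu * s i j) / 2 * sqnorm (u j t - u i t)
         + dp i j / 2 * (p j t - p i t) ^+ 2).
have Hff t : t \in `]0, T[ -> ff t = H t.
  move=> tin.
  have tcc : t \in `[0, T].
    by move: tin; rewrite !in_itv /= => /andP[h1 h2]; apply/andP; split; lra.
  have [dsym drow dnb] := hdu t tcc.
  have hA : diffusion_matrix nb (fun i j => du t i j - nu * s i j).
    split.
    - by move=> i j; rewrite dsym hssym.
    - by move=> i; rewrite sumrB -mulr_sumr drow hsrow mulr0 subrr.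
    - by move=> i j hn; rewrite dnb // hsnb // mulr0 subrr.
  rewrite /H (@alg _ _ _ c (fun i j => du t i j - nu * s i j) dp nb (fun k => u k t) (fun k => p k t) hc hcnb hA hdp (fun k => hS2 k t tin)).
  rewrite /ff; congr (- _); apply: eq_bigr => i _.
  rewrite -((hG i).2 t tin) -dotvZr hS1 //; congr dotv; apply: eq_bigr => j _.
  by congr (_ *: _ - _); ring.
have mffc : measurable_fun `[0, T] ff.
  exact: subspace_continuous_measurable_fun hcontf.
have mff : measurable_fun `]0, T[ ff.
  apply: measurable_funS mffc => //; exact: subset_itv_oo_cc.
have mH : measurable_fun `]0, T[ H.
  by apply: (eq_measurable_fun _ _ mff) => t /set_mem tin; exact: Hff.
have T0 : (BRight 0 <= BLeft T)%O by rewrite bnd_simp.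
have mH' : measurable_fun `]0, T] H.
  rewrite -(setUitv1 true T0); apply/measurable_funU => //.
  by split; [exact: mH | exact: measurable_fun_set1].
have mff' : measurable_fun `]0, T] ff.
  rewrite -(setUitv1 true T0); apply/measurable_funU => //.
  by split; [exact: mff | exact: measurable_fun_set1].
rewrite -integral_itv_obnd_cbnd; last exact/measurable_EFinP.
rewrite -integral_itv_bndo_bndc; last exact/measurable_EFinP.
transitivity (\int[lebesgue_measure]_(x in `]0%R, T[) (ff x)%:E)%E.
  by apply: eq_integral => t /set_mem tin; rewrite Hff.
rewrite integral_itv_bndo_bndc; last exact/measurable_EFinP.
rewrite integral_itv_obnd_cbnd; last exact/measurable_EFinP.
rewrite hFTC -EFinB; congr EFin.
rewrite /F /Ef /eta_kin /sqnorm; lra.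
Qed.
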